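(* Let $V$ be a vector space over a field $k$ and let $\mathcal{P}_{k\mathrm{fin}}(V)$ be the set of finite-dimensional $k$-subspaces of $V$. Let $f:\mathcal{P}_{k\mathrm{fin}}(V)\to\mathbb{R}$ satisfy $f(W_1\cap W_2)+f(W_1+W_2)\leq f(W_1)+f(W_2)$ for all $W_1,W_2\in\mathcal{P}_{k\mathrm{fin}}(V)$, and assume that $m=\min_{W\in\mathcal{P}_{k\mathrm{fin}}(V),\,W\neq\{0\}}f(W)$ exists. If $W_1$ and $W_2$ are two atoms of $f$, then $W_1=W_2$ or $W_1\cap W_2=\{0\}$.
   Context: A fragment for $f$ is a nonzero finite-dimensional subspace $W$ with $f(W)=m$; an atom for $f$ is a fragment of minimal dimension among fragments. *)

(* Defs.v *)
From HB Require Import structures.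
From mathcomp Require Import all_boot all_order all_algebra.
From mathcomp Require Import reals.
Set Implicit Arguments. Unset Strict Implicit. Unset Printing Implicit Defensive.
Import Order.TTheory GRing.Theory Num.Theory.
Local Open Scope ring_scope.

(* A "subset" of a k-vector space V is a predicate on V. *)
Definition subsp (V : Type) := V -> Prop.

Section Defs.
Variables (k : fieldType) (V : lmodType k).

Definition span (s : seq V) : subsp V :=
  fun v => exists c : 'I_(size s) -> k, v = \sum_(i < size s) c i *: s`_i.

Definition spans (s : seq V) (W : subsp V) : Prop :=
  forall v, W v <-> span s v.

Definition fin_subspace (W : subsp V) : Prop := exists s, spans s W.

Definition has_dim (W : subsp V) (n : nat) : Prop :=
  (exists s, size s = n /\ spans s W) /\
  (forall s, spans s W -> (n <= size s)%N).

Definition zeroS : subsp V := fun v => v = 0.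
Definition capS (W1 W2 : subsp V) : subsp V := fun v => W1 v /\ W2 v.
Definition addS (W1 W2 : subsp V) : subsp V :=
  fun v => exists a b, W1 a /\ W2 b /\ v = a + b.

Definition nonzeroS (W : subsp V) : Prop := W <> zeroS.

Variables (R : realType) (f : subsp V -> R).

Definition is_min_value (m : R) : Prop :=
  (exists W, fin_subspace W /\ nonzeroS W /\ f W = m) /\
  (forall W, fin_subspace W -> nonzeroS W -> m <= f W).

Definition fragment (m : R) (W : subsp V) : Prop :=
  fin_subspace W /\ nonzeroS W /\ f W = m.

Definition atom (m : R) (W : subsp V) : Prop :=
  fragment m W /\
  exists n, has_dim W n /\
    forall W' n', fragment m W' -> has_dim W' n' -> (n <= n')%N.
End Defs.

(* Main.v *)
Require Import Defs.
From HB Require Import structures.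
From mathcomp Require Import all_boot all_order all_algebra.
From mathcomp Require Import reals.
From Stdlib Require Import Classical FunctionalExtensionality PropExtensionality.
Set Implicit Arguments. Unset Strict Implicit. Unset Printing Implicit Defensive.
Import Order.TTheory GRing.Theory Num.Theory.
Local Open Scope ring_scope.

Section Gen.
Variables (k : fieldType) (V : lmodType k).

Definition closedS (P : subsp V) :=
  P 0 /\ (forall a b, P a -> P b -> P (a + b)) /\ (forall (x : k) a, P a -> P (x *: a)).

Lemma closed_sum (P : subsp V) (I : Type) (r : seq I) (F : I -> V) :
  closedS P -> (forall i, P (F i)) -> P (\sum_(i <- r) F i).
Proof.
move=> [P0 [PD PZ]] HF; elim: r => [|a r IH]; first by rewrite big_nil.
by rewrite big_cons; apply: PD.
Qed.

Lemma span_sized (s : seq V) n (H : size s = n) v :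
  Defs.span s v <-> exists c : 'I_n -> k, v = \sum_(i < n) c i *: s`_i.
Proof. by subst n. Qed.

Lemma span_closed (s : seq V) : closedS (Defs.span s).
Proof.
split; last split.
- exists (fun _ => 0); rewrite big1 // => i _; by rewrite scale0r.
- move=> a b [c1 ->] [c2 ->]; exists (fun i => c1 i + c2 i).
  by rewrite -big_split /=; apply: eq_bigr => i _; rewrite scalerDl.
- move=> x a [c ->]; exists (fun i => x * c i).
  by rewrite scaler_sumr; apply: eq_bigr => i _; rewrite scalerA.
Qed.

Lemma spans_closed (s : seq V) W : spans s W -> closedS W.
Proof.
move=> H; have [P0 [PD PZ]] := span_closed s.
split; [|split]; [by apply/H | move=> a b /H ha /H hb; apply/H; exact: PD
 | move=> x a /H ha; apply/H; exact: PZ].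
Qed.

Lemma cap_closed P Q : closedS P -> closedS Q -> closedS (capS P Q).
Proof.
move=> [P0 [PD PZ]] [Q0 [QD QZ]]; split; [|split].
- by split.
- by move=> a b [? ?] [? ?]; split; [apply: PD | apply: QD].
- by move=> x a [? ?]; split; [apply: PZ | apply: QZ].
Qed.

Lemma span_sub (s : seq V) (P : subsp V) : closedS P -> (forall i, (i < size s)%N -> P s`_i) ->
  forall v, Defs.span s v -> P v.
Proof.
move=> cP Hs v [c ->]; apply: closed_sum => // i.
by case: cP => _ [_ PZ]; apply: PZ; apply: Hs.
Qed.

Lemma dspan_cat (s1 s2 : seq V) v : Defs.span (s1 ++ s2) v <-> addS (Defs.span s1) (Defs.span s2) v.
Proof.
rewrite (span_sized (size_cat s1 s2)); split.
- move=> [c ->]; rewrite big_split_ord /=.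
  exists (\sum_(i < size s1) c (lshift (size s2) i) *: (s1 ++ s2)`_(lshift (size s2) i)).
  exists (\sum_(i < size s2) c (rshift (size s1) i) *: (s1 ++ s2)`_(rshift (size s1) i)).
  split; last split => //.
  + exists (fun i => c (lshift (size s2) i)); apply: eq_bigr => i _.
    by rewrite nth_cat /= ltn_ord.
  + exists (fun i => c (rshift (size s1) i)); apply: eq_bigr => i _.
    by rewrite nth_cat /= ltnNge leq_addr /= addKn.
- move=> [a [b [[c1 ->] [[c2 ->] ->]]]].
  exists (fun i => match fintype.split i with inl j => c1 j | inr j => c2 j end).
  rewrite big_split_ord /=; congr (_ + _); apply: eq_bigr => i _.
  + have -> : fintype.split (lshift (size s2) i) = inl i.
      by rewrite -[lshift _ _]/(unsplit (inl i)) unsplitK.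
    by rewrite nth_cat /= ltn_ord.
  + have -> : fintype.split (rshift (size s1) i) = inr i.
      by rewrite -[rshift _ _]/(unsplit (inr i)) unsplitK.
    by rewrite nth_cat /= ltnNge leq_addr /= addKn.
Qed.

End Gen.
Lemma rowspace_of (k : fieldType) (N : nat) (U : subsp 'rV[k]_N) :
  closedS U -> exists B : 'M[k]_N, forall u, U u <-> (u <= B)%MS.
Proof.
move=> [U0 [UD UZ]].
suff H : forall d (A : 'M[k]_N), (forall v, (v <= A)%MS -> U v) ->
    (N <= \rank A + d)%N -> exists B : 'M[k]_N, forall u, U u <-> (u <= B)%MS.
  apply: (H N 0) => [v|]; last by rewrite mxrank0.
  by rewrite submx0 => /eqP ->.
elim=> [|d IH] A HA Hr.
- exists A => u; split; last exact: HA.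
  move=> _; apply: submx_full; rewrite /row_full eqn_leq rank_leq_col.
  by rewrite addn0 in Hr.
- case: (classic (forall u, U u -> (u <= A)%MS)) => [Hall|].
  + by exists A => u; split; [exact: Hall | exact: HA].
  move=> /not_all_ex_not [u Hu].
  have Uu := not_imply_elim _ _ Hu; have nuA := not_imply_elim2 _ _ Hu.
  apply: (IH (A + u)%MS).
  + move=> v /sub_addsmxP [[x y] /= ->].
    apply: UD; first by apply: HA; apply: submxMl.
    have /sub_rVP [a ->] : (y *m u <= u)%MS by apply: submxMl.
    by apply: UZ.
  + have: (A < A + u)%MS.
      rewrite ltmxE addsmxSl /=; apply/negP => H; apply: nuA.
      exact: submx_trans (addsmxSr A u) H.
    move/rank_ltmx => H; apply: leq_trans Hr _; rewrite addnS -addSn; exact: leq_add H (leqnn d).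
Qed.

Section Key.
Variables (k : fieldType) (V : lmodType k).

Definition phi (t : seq V) (c : 'rV[k]_(size t)) : V := \sum_(i < size t) c 0 i *: t`_i.

Lemma phi_mul (t : seq V) r (x : 'rV[k]_r) (M : 'M[k]_(r, size t)) :
  phi (x *m M) = \sum_(j < r) x 0 j *: phi (row j M).
Proof.
rewrite /phi; under eq_bigr => i _ do rewrite mxE scaler_suml.
rewrite exchange_big /=; apply: eq_bigr => j _; rewrite scaler_sumr.
by apply: eq_bigr => i _; rewrite mxE scalerA.
Qed.

Lemma key (t : seq V) (P : subsp V) : closedS P -> (forall v, P v -> Defs.span t v) ->
  exists s : seq V, spans s P /\ (size s <= size t)%N /\
    ((exists w, Defs.span t w /\ ~ P w) -> (size s < size t)%N).
Proof.
move=> cP Pt; have cP' := cP; case: cP' => [P0 [PD PZ]].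
pose U : subsp 'rV[k]_(size t) := fun c => P (phi c).
have cU : closedS U.
  split; [|split].
  - by rewrite /U /phi big1 // => i _; rewrite mxE scale0r.
  - move=> a b Ha Hb; rewrite /U /phi.
    under eq_bigr => i _ do rewrite mxE scalerDl.
    by rewrite big_split; apply: PD.
  - move=> x a Ha; rewrite /U /phi.
    under eq_bigr => i _ do rewrite mxE -scalerA.
    by rewrite -scaler_sumr; apply: PZ.
have [B HB] := rowspace_of cU.
pose RB := row_base B.
exists (map (fun i => phi (row i RB)) (enum 'I_(\rank B))).
have sz : size (map (fun i => phi (row i RB)) (enum 'I_(\rank B))) = \rank B.
  by rewrite size_map size_enum_ord.
have nthE : forall i : 'I_(\rank B),
    (map (fun i => phi (row i RB)) (enum 'I_(\rank B)))`_i = phi (row i RB).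
  by move=> i; rewrite (nth_map i) ?size_enum_ord // nth_ord_enum.
have inP : forall c, Defs.span t c -> exists c' : 'rV[k]_(size t), c = phi c'.
  move=> c [d ->]; exists (\row_i d i); rewrite /phi.
  by apply: eq_bigr => i _; rewrite mxE.
rewrite sz; split; last split.
- move=> v; split.
  + move=> Pv; have [c Ec] := inP _ (Pt _ Pv); subst v.
    have : (c <= RB)%MS by rewrite /RB (eq_row_base B); exact: (proj1 (HB c) Pv).
    move/submxP => [x ->]; rewrite phi_mul.
    apply/(span_sized sz); exists (fun j => x 0 j).
    by apply: eq_bigr => j _; rewrite nthE.
  + apply: span_sub => // i; rewrite sz => ilt.
    rewrite (nthE (Ordinal ilt)); apply: (proj2 (HB _)).
    apply: submx_trans (row_sub _ RB) _; by rewrite /RB (eq_row_base B).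
- exact: rank_leq_col.
- move=> [w [tw nPw]]; have [c Ec] := inP _ tw.
  rewrite ltn_neqAle rank_leq_col andbT; apply/negP => /eqP Hf.
  apply: nPw; rewrite Ec; apply: (proj2 (HB _)); apply: submx_full.
  by rewrite /row_full Hf.
Qed.

Lemma dim_exists (W : subsp V) : fin_subspace W -> exists n, has_dim W n.
Proof.
move=> [s0 Hs0].
suff H : forall n (s : seq V), (size s <= n)%N -> spans s W -> exists n, has_dim W n.
  exact: (H _ s0 (leqnn _) Hs0).
elim=> [|n IH] s Hsz Hs.
- exists (size s); split; first by exists s.
  by move=> s' _; move: Hsz; rewrite leqn0 => /eqP ->.
- case: (classic (forall s', spans s' W -> (size s <= size s')%N)) => [Hall|].
  + by exists (size s); split; first by exists s.
  move=> /not_all_ex_not [s' Hs'].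
  have Hs'W := not_imply_elim _ _ Hs'; have Hlt := not_imply_elim2 _ _ Hs'.
  apply: (IH s') => //; move/negP: Hlt; rewrite -ltnNge => Hlt.
  by rewrite -ltnS; exact: leq_trans Hlt Hsz.
Qed.

End Key.

Lemma pred_ext (V : Type) (P Q : subsp V) : (forall v, P v <-> Q v) -> P = Q.
Proof.
move=> H; apply: functional_extensionality => v; apply: propositional_extensionality; exact: H.
Qed.

Theorem mainTheorem17 (k : fieldType) (V : lmodType k) (R : realType)
  (f : subsp V -> R)
  (hsub : forall W1 W2 : subsp V, fin_subspace W1 -> fin_subspace W2 ->
     f (capS W1 W2) + f (addS W1 W2) <= f W1 + f W2)
  (m : R) (hm : is_min_value f m)
  (W1 W2 : subsp V) (h1 : atom f m W1) (h2 : atom f m W2) :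
  W1 = W2 \/ capS W1 W2 = zeroS (V:=V).
Proof.
case: (classic (capS W1 W2 = zeroS (V:=V))) => [->|hnz]; first by right.
left.
case: h1 => [[fin1 [nz1 fW1]] [n1 [[[t1 [st1 sp1]] mn1] min1]]].
case: h2 => [[fin2 [nz2 fW2]] [n2 [[[t2 [st2 sp2]] mn2] min2]]].
have c1 := spans_closed sp1; have c2 := spans_closed sp2.
have ccap := cap_closed c1 c2.
have [s [sps _]] := key ccap (fun v Hv => proj1 (sp1 v) (proj1 Hv)).
have fincap : fin_subspace (capS W1 W2) by exists s.
have finadd : fin_subspace (addS W1 W2).
  exists (t1 ++ t2) => v. rewrite dspan_cat; split.
  - by move=> [a [b [Ha [Hb ->]]]]; exists a, b; split; [apply/sp1|split; [apply/sp2|]].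
  - by move=> [a [b [Ha [Hb ->]]]]; exists a, b; split; [apply/sp1|split; [apply/sp2|]].
have nzadd : nonzeroS (addS W1 W2).
  move=> Hz; apply: nz1; apply: pred_ext => v; split.
  - move=> Hv; have : addS W1 W2 v by exists v, 0; split=> //; split; [case: c2|rewrite addr0].
    by rewrite Hz.
  - by rewrite /zeroS => ->; case: c1.
have := hsub W1 W2 fin1 fin2.
have := proj2 hm _ fincap hnz; have := proj2 hm _ finadd nzadd.
rewrite fW1 fW2 => Ha Hc Hs.
have fcap : f (capS W1 W2) = m.
  apply/eqP; rewrite eq_le Hc andbT.
  by rewrite -(lerD2r (f (addS W1 W2))); apply: (le_trans Hs); rewrite lerD2l.
have frag : fragment f m (capS W1 W2) by [].
have [n' hd'] := dim_exists fincap.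
have le1 := min1 _ _ frag hd'; have le2 := min2 _ _ frag hd'.
have sub : forall (W : subsp V) t n, spans t W -> size t = n -> (n <= n')%N ->
    (forall v, capS W1 W2 v -> W v) -> forall v, W v -> capS W1 W2 v.
  move=> W t n spt stn len Hsub v Wv; apply: NNPP => nc.
  have [s' [sps' [_ Hlt]]] := key ccap (fun v Hv => proj1 (spt v) (Hsub v Hv)).
  have := Hlt (ex_intro _ v (conj (proj1 (spt v) Wv) nc)).
  rewrite stn => lt; have := proj2 hd' _ sps'.
  by move=> le; move: (leq_trans lt (leq_trans len le)); rewrite ltnn.
have s1 := sub W1 t1 n1 sp1 st1 le1 (fun v H => proj1 H).
have s2 := sub W2 t2 n2 sp2 st2 le2 (fun v H => proj2 H).
apply: pred_ext => v; split.
- by move=> /s1 [].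
- by move=> /s2 [].
Qed.
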